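(* Let $A \in \mathbb{R}^{m \times n_A}$ and $B \in \mathbb{R}^{m \times n_B}$, where the columns of $B$ are nonzero. Let $k \le n_B$ and let $OPT_k$ be a set of $k$ columns of $B$ maximizing $f_A(S)$ over all sets $S$ of $k$ columns of $B$, and assume $\sigma_{\min}(OPT_k) > 0$. Let $\varepsilon > 0$, and let $T_r$ be the set of columns output by $\textsc{Greedy}(A, B, r)$ for $r = \left\lceil \frac{16k}{\varepsilon\, \sigma_{\min}(OPT_k)} \right\rceil$. Then $$f_A(T_r) \ge (1-\varepsilon)\, f_A(OPT_k).$$
   Context: For a finite set $V$ of vectors in $\mathbb{R}^m$, $\Pi_V$ denotes the orthogonal projector onto $\mathrm{span}(V)$. For a matrix $M$ with $m$ rows, $f_M(V) = \|\Pi_V M\|_F^2$ (the squared Frobenius norm of the projection of $M$ onto $\mathrm{span}(V)$). For a finite set $V$ of nonzero vectors, $\sigma_{\min}(V)$ is the smallest squared singular value of the matrix whose columns are the vectors of $V$ rescaled to unit length, i.e. $\inf_{\|x\|_2=1}\|Mx\|_2^2$ for that matrix $M$. The algorithm $\textsc{Greedy}(A, B, r)$: start with $S = \emptyset$; for $i = 1, \dots, r$, pick a column $B_j$ of $B$ maximizing $f_A(S \cup \{B_j\})$ and set $S \leftarrow S \cup \{B_j\}$; return $S$. *)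

(* Defs.v *)
From HB Require Import structures.
From mathcomp Require Import all_boot all_order all_algebra.
From mathcomp Require Import boolp classical_sets reals.
From Stdlib Require Import ClassicalEpsilon.
Set Implicit Arguments. Unset Strict Implicit. Unset Printing Implicit Defensive.
Import Order.TTheory GRing.Theory Num.Theory.
Local Open Scope ring_scope.
Local Open Scope classical_set_scope.

Section Defs.
Variables (R : realType) (m nB : nat).

Definition sqnorm (p : nat) (x : 'cV[R]_p) : R := \sum_i (x i 0) ^+ 2.

Definition frob2 (p q : nat) (M : 'M[R]_(p, q)) : R := \sum_i \sum_j (M i j) ^+ 2.

Definition in_span (B : 'M[R]_(m, nB)) (S : {set 'I_nB}) (x : 'cV[R]_m) : Prop :=
  exists c : 'I_nB -> R, x = \sum_(j in S) c j *: col j B.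

Definition is_orth_proj (B : 'M[R]_(m, nB)) (S : {set 'I_nB}) (P : 'M[R]_m) : Prop :=
  forall x : 'cV[R]_m, in_span B S (P *m x) /\
    forall y, in_span B S y -> y^T *m (x - P *m x) = 0.

(* the orthogonal projector Pi_V (exists and is unique) *)
Definition proj (B : 'M[R]_(m, nB)) (S : {set 'I_nB}) : 'M[R]_m :=
  epsilon (inhabits 0) (is_orth_proj B S).

Definition fA (nA : nat) (A : 'M[R]_(m, nA)) (B : 'M[R]_(m, nB)) (S : {set 'I_nB}) : R :=
  frob2 (proj B S *m A).

Definition normalized_cols (B : 'M[R]_(m, nB)) (S : {set 'I_nB}) : 'M[R]_(m, #|S|) :=
  \matrix_(i < m, t < #|S|)
     (B i (enum_val t) / Num.sqrt (sqnorm (col (enum_val t) B))).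

Definition sigma_min (B : 'M[R]_(m, nB)) (S : {set 'I_nB}) : R :=
  inf [set sqnorm (normalized_cols B S *m x) | x in [set x : 'cV[R]_#|S| | sqnorm x = 1]].

(* g : 'I_r -> 'I_nB is a run of Greedy(A, B, r): at step i (with current set
   S_i = { B_{g t} | t < i }) the chosen column B_{g i} maximizes f_A(S_i u {B_j}). *)
Definition greedy_set (r : nat) (g : 'I_r -> 'I_nB) (i : nat) : {set 'I_nB} :=
  [set g t | t : 'I_r & (t < i)%N].

Definition is_greedy_run (nA : nat) (A : 'M[R]_(m, nA)) (B : 'M[R]_(m, nB))
    (r : nat) (g : 'I_r -> 'I_nB) : Prop :=
  forall (i : 'I_r) (j : 'I_nB),
    fA A B (greedy_set g i :|: [set j]) <= fA A B (greedy_set g i :|: [set g i]).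

Definition greedy_output (r : nat) (g : 'I_r -> 'I_nB) : {set 'I_nB} :=
  [set g t | t : 'I_r].

End Defs.

(* Main.v *)
Require Import Defs.
From HB Require Import structures.
From mathcomp Require Import all_boot all_order all_algebra.
From mathcomp Require Import boolp classical_sets reals.
From mathcomp Require Import ring lra.
From Stdlib Require Import ClassicalEpsilon.
Import Order.TTheory GRing.Theory Num.Theory.
Local Open Scope ring_scope.
Set Implicit Arguments. Unset Strict Implicit. Unset Printing Implicit Defensive.

Section Basic.
Variable R : realType.

Lemma CS_full (I : finType) (x y : I -> R) :
  (\sum_i x i * y i) ^+ 2 <= (\sum_i x i ^+ 2) * (\sum_i y i ^+ 2).
Proof.
have E : \sum_i \sum_j (x i * y j - x j * y i) ^+ 2 =
   2 * ((\sum_i x i ^+ 2) * (\sum_i y i ^+ 2)) - 2 * (\sum_i x i * y i) ^+ 2.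
  have H1 : forall i j, (x i * y j - x j * y i) ^+ 2 =
     x i ^+ 2 * y j ^+ 2 + y i ^+ 2 * x j ^+ 2 - 2 * ((x i * y i) * (x j * y j)).
    by move=> i j; ring.
  under eq_bigr do under eq_bigr do rewrite H1.
  under eq_bigr do rewrite sumrB big_split /=.
  rewrite sumrB big_split /=.
  have -> : \sum_i \sum_j x i ^+ 2 * y j ^+ 2 = (\sum_i x i ^+ 2) * (\sum_i y i ^+ 2).
    by rewrite mulr_suml; apply: eq_bigr => i _; rewrite mulr_sumr.
  have -> : \sum_i \sum_j y i ^+ 2 * x j ^+ 2 = (\sum_i y i ^+ 2) * (\sum_i x i ^+ 2).
    by rewrite mulr_suml; apply: eq_bigr => i _; rewrite mulr_sumr.
  have -> : \sum_i \sum_j 2 * (x i * y i * (x j * y j)) = 2 * (\sum_i x i * y i) ^+ 2.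
    rewrite expr2 [(\sum_i _) * _]mulr_suml mulr_sumr; apply: eq_bigr => i _.
    by rewrite mulr_sumr mulr_sumr; apply: eq_bigr => j _; ring.
  ring.
have : 0 <= \sum_i \sum_j (x i * y j - x j * y i) ^+ 2.
  by apply: sumr_ge0 => i _; apply: sumr_ge0 => j _; apply: sqr_ge0.
rewrite E; lra.
Qed.

Lemma CS_cond (I : finType) (P : pred I) (x y : I -> R) :
  (\sum_(i | P i) x i * y i) ^+ 2 <=
  (\sum_(i | P i) x i ^+ 2) * (\sum_(i | P i) y i ^+ 2).
Proof.
rewrite !(big_mkcond P).
have := CS_full (fun i => if P i then x i else 0) (fun i => if P i then y i else 0).
congr (_ ^+ 2 <= _ * _); apply: eq_bigr => i _; case: (P i) => //; ring.
Qed.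

Definition dot p (u v : 'cV[R]_p) := \sum_i u i 0 * v i 0.

Lemma sqnormE p (u : 'cV[R]_p) : sqnorm u = dot u u.
Proof. by apply: eq_bigr => i _; rewrite expr2. Qed.

Lemma sqnorm_ge0 p (u : 'cV[R]_p) : 0 <= sqnorm u.
Proof. by apply: sumr_ge0 => i _; apply: sqr_ge0. Qed.

Lemma sqnorm_eq0 p (u : 'cV[R]_p) : sqnorm u = 0 -> u = 0.
Proof.
move=> /eqP; rewrite psumr_eq0 => [/allP H|i _]; last exact: sqr_ge0.
apply/matrixP => i j; rewrite (ord1 j) mxE.
by have := H i (mem_index_enum i); rewrite sqrf_eq0 => /eqP.
Qed.

Lemma dotC p (u v : 'cV[R]_p) : dot u v = dot v u.
Proof. by apply: eq_bigr => i _; rewrite mulrC. Qed.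

Lemma dotDr p (u v w : 'cV[R]_p) : dot u (v + w) = dot u v + dot u w.
Proof. by rewrite /dot -big_split; apply: eq_bigr => i _; rewrite mxE mulrDr. Qed.

Lemma dotDl p (u v w : 'cV[R]_p) : dot (v + w) u = dot v u + dot w u.
Proof. by rewrite dotC dotDr dotC (dotC w). Qed.

Lemma dotNr p (u v : 'cV[R]_p) : dot u (- v) = - dot u v.
Proof. by rewrite /dot -sumrN; apply: eq_bigr => i _; rewrite mxE mulrN. Qed.

Lemma dotNl p (u v : 'cV[R]_p) : dot (- v) u = - dot v u.
Proof. by rewrite dotC dotNr dotC. Qed.

Lemma dotBr p (u v w : 'cV[R]_p) : dot u (v - w) = dot u v - dot u w.
Proof. by rewrite dotDr dotNr. Qed.

Lemma dotBl p (u v w : 'cV[R]_p) : dot (v - w) u = dot v u - dot w u.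
Proof. by rewrite dotDl dotNl. Qed.

Lemma dotZl p a (u v : 'cV[R]_p) : dot (a *: u) v = a * dot u v.
Proof. by rewrite /dot mulr_sumr; apply: eq_bigr => i _; rewrite mxE mulrA. Qed.

Lemma dotZr p a (u v : 'cV[R]_p) : dot u (a *: v) = a * dot u v.
Proof. by rewrite dotC dotZl dotC. Qed.

Lemma dot_suml p (I : finType) (P : pred I) (F : I -> 'cV[R]_p) v :
  dot (\sum_(i | P i) F i) v = \sum_(i | P i) dot (F i) v.
Proof.
rewrite /dot exchange_big /=; apply: eq_bigr => k _.
by rewrite summxE mulr_suml.
Qed.

Lemma dotE p (u v : 'cV[R]_p) : (u^T *m v) 0 0 = dot u v.
Proof. by rewrite mxE; apply: eq_bigr => i _; rewrite mxE. Qed.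

Lemma dot0P p (u v : 'cV[R]_p) : u^T *m v = 0 <-> dot u v = 0.
Proof.
split=> [H|H]; first by rewrite -dotE H mxE.
by apply/matrixP => i j; rewrite (ord1 i) (ord1 j) dotE H mxE.
Qed.

Lemma CS_dot p (u v : 'cV[R]_p) : dot u v ^+ 2 <= sqnorm u * sqnorm v.
Proof. exact: CS_full. Qed.

Lemma sqnormD p (u v : 'cV[R]_p) :
  sqnorm (u + v) = sqnorm u + 2 * dot u v + sqnorm v.
Proof. rewrite !sqnormE !dotDl !dotDr (dotC v u); ring. Qed.

End Basic.


Section Proj.
Variables (R : realType) (m nB : nat) (B : 'M[R]_(m, nB)).

Definition Ct (S : {set 'I_nB}) : 'M[R]_(nB, m) :=
  \matrix_(j, i) (if j \in S then B i j else 0).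

Lemma in_spanE S x : in_span B S x <-> (x^T <= Ct S)%MS.
Proof.
split.
- case=> c ->; apply/submxP; exists (\row_j c j).
  apply/matrixP => i k; rewrite (ord1 i) !mxE summxE big_mkcond /=.
  apply: eq_bigr => j _; rewrite !mxE; case: (j \in S); rewrite ?mulr0 //.
- case/submxP => D HD; exists (fun j => D 0 j).
  apply/matrixP => k l; rewrite (ord1 l).
  have := congr1 (fun M : 'M[R]_(1, m) => M 0 k) HD; rewrite !mxE => ->.
  rewrite summxE [RHS]big_mkcond /=; apply: eq_bigr => j _; rewrite !mxE.
  by case: (j \in S); rewrite ?mulr0.
Qed.

Lemma rowsq0 p (u : 'rV[R]_p) : u *m u^T = 0 -> u = 0.
Proof.
move=> H.
have : dot u^T u^T = 0 by apply/dot0P; rewrite trmxK.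
rewrite -sqnormE => /sqnorm_eq0 /(congr1 trmx); by rewrite trmxK trmx0.
Qed.

Lemma exists_proj S : exists P, is_orth_proj B S P.
Proof.
set W := row_base (Ct S).
have WC : (W <= Ct S)%MS by rewrite /W eq_row_base.
have CW : (Ct S <= W)%MS by rewrite /W eq_row_base.
have Wf : row_free W by exact: row_base_free.
clearbody W.
set G := W *m W^T.
have GU : G \in unitmx.
  rewrite -row_free_unit; apply: inj_row_free => v Hv.
  have H0 : (v *m W) *m (v *m W)^T = 0.
    by rewrite trmx_mul !mulmxA -(mulmxA v W) -/G Hv mul0mx.
  apply/eqP; rewrite -(mulmx_free_eq0 _ Wf).
  by rewrite (rowsq0 H0).
exists (W^T *m invmx G *m W) => x; split.
- apply/in_spanE; rewrite -!mulmxA trmx_mul trmxK.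
  exact: submx_trans (submxMl _ _) WC.
- move=> y /in_spanE yC.
  have : (y^T <= W)%MS by exact: submx_trans yC CW.
  case/submxP => e ->.
  rewrite mulmxBr !mulmxA -(mulmxA e W W^T) -/G mulmxK // subrr //.
Qed.

Lemma projP S : is_orth_proj B S (proj B S).
Proof. by rewrite /proj; apply: epsilon_spec; exact: exists_proj. Qed.

End Proj.


Section ProjTh.
Variables (R : realType) (m nB : nat) (B : 'M[R]_(m, nB)).
Local Notation P S := (proj B S).
Local Notation span := (in_span B).
Implicit Types (S T : {set 'I_nB}) (x y u r : 'cV[R]_m) (j : 'I_nB).

Lemma spanD S x y : span S x -> span S y -> span S (x + y).
Proof.
case=> c -> [d ->]; exists (fun j => c j + d j).
by rewrite -big_split; apply: eq_bigr => j _; rewrite scalerDl.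
Qed.

Lemma spanZ S a x : span S x -> span S (a *: x).
Proof.
case=> c ->; exists (fun j => a * c j).
by rewrite scaler_sumr; apply: eq_bigr => j _; rewrite scalerA.
Qed.

Lemma spanB S x y : span S x -> span S y -> span S (x - y).
Proof. by move=> hx hy; rewrite -scaleN1r; apply: spanD => //; apply: spanZ. Qed.

Lemma span_col S j : j \in S -> span S (col j B).
Proof.
move=> jS; exists (fun i => if i == j then 1 else 0).
rewrite (bigD1 j) //= eqxx scale1r big1 ?addr0 // => i /andP [_ /negbTE ->].
by rewrite scale0r.
Qed.

Lemma span_mono S T x : S \subset T -> span S x -> span T x.
Proof.
move=> /fintype.subsetP ST [c ->]; exists (fun j => if j \in S then c j else 0).
rewrite big_mkcond [RHS]big_mkcond /=; apply: eq_bigr => j _.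
case: (boolP (j \in S)) => jS; first by rewrite (ST _ jS).
by case: (j \in T); rewrite ?scale0r.
Qed.

Lemma pin S x : span S (P S *m x).
Proof. by case: (projP B S x). Qed.

Lemma porth S x y : span S y -> dot y (x - P S *m x) = 0.
Proof. by case: (projP B S x) => _ H /H /dot0P. Qed.

Lemma pfix S y : span S y -> P S *m y = y.
Proof.
move=> hy.
have hz : span S (y - P S *m y) by apply: spanB => //; apply: pin.
have := porth y hz; rewrite -sqnormE => /sqnorm_eq0 /eqP.
by rewrite subr_eq0 => /eqP <-.
Qed.

Lemma ppyth S x : sqnorm x = sqnorm (P S *m x) + sqnorm (x - P S *m x).
Proof.
have := sqnormD (P S *m x) (x - P S *m x).
rewrite subrKC porth ?mulr0 ?addr0 //; apply: pin.
Qed.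

Lemma ple S x : sqnorm (P S *m x) <= sqnorm x.
Proof. by rewrite [X in _ <= X](ppyth S x) lerDl sqnorm_ge0. Qed.

Lemma pstep S T x : S \subset T ->
  sqnorm (P T *m x) = sqnorm (P S *m x) + sqnorm (P T *m (x - P S *m x)).
Proof.
move=> ST.
have hS : span T (P S *m x) by apply: span_mono ST (pin _ _).
have E : P T *m (x - P S *m x) = P T *m x - P S *m x by rewrite mulmxBr (pfix hS).
have := sqnormD (P S *m x) (P T *m (x - P S *m x)).
rewrite E subrKC => ->.
have -> : P T *m x - P S *m x = (x - P S *m x) - (x - P T *m x).
  by rewrite opprB [RHS]addrC addrA subrK.
rewrite dotBr porth ?(porth _ hS) ?subrr ?mulr0 ?addr0 //; apply: pin.
Qed.

Lemma pcs T u r : span T u -> dot u r ^+ 2 <= sqnorm u * sqnorm (P T *m r).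
Proof.
move=> hu.
have -> : dot u r = dot u (P T *m r).
  have := porth r hu; rewrite dotBr => /eqP; rewrite subr_eq0 => /eqP.
  by [].
exact: CS_dot.
Qed.

End ProjTh.


Section Main.
Variables (R : realType) (m nB : nat) (B : 'M[R]_(m, nB)).
Local Notation P S := (proj B S).
Local Notation span := (in_span B).
Implicit Types (S T O : {set 'I_nB}) (x y u r : 'cV[R]_m) (j : 'I_nB).

Lemma sqnormZ p a (u : 'cV[R]_p) : sqnorm (a *: u) = a ^+ 2 * sqnorm u.
Proof. by rewrite !sqnormE dotZl dotZr mulrA expr2. Qed.

Lemma fA_cols nA (A : 'M[R]_(m, nA)) S :
  fA A B S = \sum_(j < nA) sqnorm (P S *m col j A).
Proof.
rewrite /fA /frob2 exchange_big /=; apply: eq_bigr => j _.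
rewrite /sqnorm; apply: eq_bigr => i _; rewrite !mxE; congr (_ ^+ 2).
by apply: eq_bigr => k _; rewrite !mxE.
Qed.

Definition sn j := Num.sqrt (sqnorm (col j B)).

Lemma sigma_lb O (c : 'I_nB -> R) :
  sigma_min B O * \sum_(v in O) c v ^+ 2 <=
  sqnorm (\sum_(v in O) (c v / sn v) *: col v B).
Proof.
pose x : 'cV[R]_#|O| := \col_t c (enum_val t).
have Ex : sqnorm x = \sum_(v in O) c v ^+ 2.
  by rewrite (big_enum_val (fun v => c v ^+ 2)); apply: eq_bigr => t _; rewrite mxE.
have EN : normalized_cols B O *m x = \sum_(v in O) (c v / sn v) *: col v B.
  apply/matrixP => i j; rewrite (ord1 j) !mxE summxE.
  rewrite (big_enum_val (fun v => ((c v / sn v) *: col v B) i 0)).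
  by apply: eq_bigr => t _; rewrite !mxE /sn; ring.
case: (eqVneq (sqnorm x) 0) => [x0|xn0].
  by rewrite -Ex x0 mulr0 sqnorm_ge0.
have xpos : 0 < sqnorm x by rewrite lt_neqAle eq_sym xn0 sqnorm_ge0.
pose q := Num.sqrt (sqnorm x).
have qpos : 0 < q by rewrite sqrtr_gt0.
have q2 : q ^+ 2 = sqnorm x by rewrite sqr_sqrtr // ltW.
pose x' := q^-1 *: x.
have x'1 : sqnorm x' = 1 by rewrite sqnormZ exprVn q2 mulVf.
have hs : sigma_min B O <= sqnorm (normalized_cols B O *m x').
  rewrite /sigma_min; apply: ge_inf.
    by exists 0 => z [w _ <-]; apply: sqnorm_ge0.
  by exists x'.
move: hs; rewrite /x' -scalemxAr sqnormZ exprVn q2 EN -Ex mulrC.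
by rewrite -ler_pdivlMr // mulrC.
Qed.

Lemma sqnorm_gt0 j : col j B != 0 -> 0 < sqnorm (col j B).
Proof.
move=> h; rewrite lt_neqAle sqnorm_ge0 andbT eq_sym.
by apply/eqP => /sqnorm_eq0 /eqP; apply/negP.
Qed.

Lemma opt_key O (hB : forall j, col j B != 0) r :
  sigma_min B O * sqnorm (P O *m r) <=
  \sum_(v in O) dot (col v B) r ^+ 2 / sqnorm (col v B).
Proof.
set y := P O *m r.
have [c Ec] : span O y by apply: pin.
have snp v : 0 < sn v by rewrite sqrtr_gt0 sqnorm_gt0.
have sn2 v : sn v ^+ 2 = sqnorm (col v B) by rewrite sqr_sqrtr // ltW // sqnorm_gt0.
have Hy : sqnorm y = dot y r.
  have := porth r (pin B O r); rewrite -/y dotBr sqnormE => /eqP.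
  by rewrite subr_eq0 => /eqP.
have Hd : dot y r = \sum_(v in O) (c v * sn v) * (dot (col v B) r / sn v).
  rewrite {1}Ec dot_suml; apply: eq_bigr => v _.
  by rewrite dotZl -mulrA [sn v * _]mulrC divfK // gt_eqF.
have HCS := CS_cond (mem O) (fun v => c v * sn v) (fun v => dot (col v B) r / sn v).
rewrite -Hd -Hy /= in HCS.
have Hs := sigma_lb O (fun v => c v * sn v).
have Ey : \sum_(v in O) (c v * sn v / sn v) *: col v B = y.
  by rewrite Ec; apply: eq_bigr => v _; rewrite mulfK // gt_eqF.
rewrite Ey in Hs.
have ED : \sum_(v in O) (dot (col v B) r / sn v) ^+ 2 =
          \sum_(v in O) dot (col v B) r ^+ 2 / sqnorm (col v B).
  by apply: eq_bigr => v _; rewrite expr_div_n sn2.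
rewrite ED in HCS.
set Y := sqnorm y in HCS Hs *.
set D := \sum_(v in O) dot (col v B) r ^+ 2 / sqnorm (col v B) in HCS *.
set A := \sum_(v in O) (c v * sn v) ^+ 2 in HCS Hs.
set s := sigma_min B O in Hs *.
have Y0 : 0 <= Y by apply: sqnorm_ge0.
have D0 : 0 <= D.
  by apply: sumr_ge0 => v _; apply: divr_ge0; [apply: sqr_ge0 | apply: sqnorm_ge0].
have A0 : 0 <= A by apply: sumr_ge0 => v _; apply: sqr_ge0.
case: (lerP s 0) => hs0; first by apply: le_trans (_ : 0 <= D) => //; nra.
case: (eqVneq Y 0) => [->|Yn0]; first by rewrite mulr0.
have Yp : 0 < Y by rewrite lt_neqAle eq_sym Yn0.
have : s * Y * Y <= D * Y by nra.
by rewrite ler_pM2r.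
Qed.

Lemma CS2 p q (u w : 'I_q -> 'cV[R]_p) :
  (\sum_k dot (u k) (w k)) ^+ 2 <= (\sum_k sqnorm (u k)) * (\sum_k sqnorm (w k)).
Proof.
rewrite /dot /sqnorm !pair_bigA /=.
exact: (CS_full (fun z : 'I_q * 'I_p => u z.1 z.2 0) (fun z => w z.1 z.2 0)).
Qed.

Lemma ff_bound nA (A : 'M[R]_(m, nA)) S O : fA A B S <= fA A B O ->
  (fA A B O - fA A B S) ^+ 2 <=
  4 * fA A B O * \sum_k sqnorm (P O *m (col k A - P S *m col k A)).
Proof.
move=> hSO.
pose al k := P O *m (P S *m col k A).
pose be k := P O *m (col k A - P S *m col k A).
have Eab k : P O *m col k A = al k + be k by rewrite /al /be mulmxBr subrKC.
have EF : fA A B O = \sum_k sqnorm (al k + be k).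
  by rewrite fA_cols; apply: eq_bigr => k _; rewrite Eab.
have Ha : \sum_k sqnorm (al k) <= fA A B S.
  by rewrite fA_cols; apply: ler_sum => k _; apply: ple.
have EU : fA A B O - \sum_k sqnorm (al k) =
   \sum_k dot (al k + be k) (be k) + \sum_k dot (al k) (be k).
  rewrite EF -sumrB -big_split; apply: eq_bigr => k _ /=.
  by rewrite sqnormD dotDl !sqnormE; ring.
have HU := CS2 (fun k => al k + be k) be.
have HV := CS2 al be.
rewrite /= -EF in HU.
rewrite -/(be _) in HU HV *.
set F := fA A B O in hSO EF EU HU *.
set f := fA A B S in hSO Ha *.
set E := \sum_k sqnorm (be k) in HU HV *.
set Fa := \sum_k sqnorm (al k) in Ha EU HV.
set U := \sum_k dot (al k + be k) (be k) in EU HU.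
set V := \sum_k dot (al k) (be k) in EU HV.
have E0 : 0 <= E by apply: sumr_ge0 => k _; apply: sqnorm_ge0.
have Fa0 : 0 <= Fa by apply: sumr_ge0 => k _; apply: sqnorm_ge0.
have h1 : (F - f) ^+ 2 <= (U + V) ^+ 2.
  rewrite -EU; nra.
have h2 : (U + V) ^+ 2 <= 2 * U ^+ 2 + 2 * V ^+ 2 by have := sqr_ge0 (U - V); rewrite !expr2; nra.
nra.
Qed.

End Main.


Section Greedy.
Variables (R : realType) (m nA nB : nat) (A : 'M[R]_(m, nA)) (B : 'M[R]_(m, nB)).
Local Notation P S := (proj B S).
Local Notation f S := (fA A B S).
Implicit Types (S T O : {set 'I_nB}).

Lemma fA_ge0 S : 0 <= f S.
Proof. by rewrite fA_cols; apply: sumr_ge0 => k _; apply: sqnorm_ge0. Qed.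

Lemma fA_mono S T : S \subset T -> f S <= f T.
Proof.
move=> ST; rewrite !fA_cols; apply: ler_sum => k _.
by rewrite (pstep _ _ ST) lerDl sqnorm_ge0.
Qed.

Lemma gain S T v : S \subset T -> v \in T -> col v B != 0 ->
  \sum_(k < nA) dot (col v B) (col k A - P S *m col k A) ^+ 2 / sqnorm (col v B)
  <= f T - f S.
Proof.
move=> ST vT hv; rewrite !fA_cols -sumrB; apply: ler_sum => k _.
rewrite (pstep _ _ ST) [X in _ <= X]addrAC subrr add0r ler_pdivrMr ?sqnorm_gt0 // mulrC.
by apply: pcs; apply: span_col.
Qed.

Variables (r : nat) (g : 'I_r -> 'I_nB).

Lemma gset_succ (i : 'I_r) : greedy_set g i.+1 = greedy_set g i :|: [set g i].
Proof.
apply/finset.setP => x; rewrite finset.in_setU finset.in_set1; apply/imsetP/orP.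
- case=> t; rewrite inE ltnS leq_eqVlt => /orP [/eqP ti | ti] ->.
    by right; rewrite (_ : t = i) //; apply: val_inj.
  by left; apply/imsetP; exists t; rewrite ?inE.
- case => [/imsetP [t ti ->] | /eqP ->].
    by exists t => //; move: ti; rewrite !inE => /ltnW.
  by exists i; rewrite ?inE.
Qed.

Lemma gset_r : greedy_output g = greedy_set g r.
Proof.
apply/finset.setP => x; apply/imsetP/imsetP => [[t _ ->]|[t _ ->]]; exists t => //.
by rewrite inE ltn_ord.
Qed.

Lemma gset_mono (i : 'I_r) : f (greedy_set g i) <= f (greedy_set g i.+1).
Proof. by rewrite gset_succ; apply: fA_mono; apply: finset.subsetUl. Qed.

Lemma greedy_step O (hB : forall j, col j B != 0) (hg : is_greedy_run A B g)
  (i : 'I_r) : f (greedy_set g i) <= f O ->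
  sigma_min B O * (f O - f (greedy_set g i)) ^+ 2 <=
  4 * #|O|%:R * f O * (f (greedy_set g i.+1) - f (greedy_set g i)).
Proof.
move=> hle.
set S := greedy_set g i.
set E := \sum_(k < nA) sqnorm (P O *m (col k A - P S *m col k A)).
have h1 := ff_bound hle; rewrite -/E in h1.
have h2 : sigma_min B O * E <=
   \sum_(v in O) \sum_(k < nA) dot (col v B) (col k A - P S *m col k A) ^+ 2
        / sqnorm (col v B).
  rewrite /E mulr_sumr exchange_big /=; apply: ler_sum => k _.
  exact: opt_key.
have h3 : \sum_(v in O) \sum_(k < nA) dot (col v B) (col k A - P S *m col k A) ^+ 2
        / sqnorm (col v B) <= #|O|%:R * (f (greedy_set g i.+1) - f S).
  apply: le_trans (_ : _ <= \sum_(v in O) (f (greedy_set g i.+1) - f S)) _;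
    last by rewrite sumr_const mulr_natl.
  apply: ler_sum => v _.
  apply: le_trans (gain (T := S :|: [set v]) _ _ _) _.
  - exact: finset.subsetUl.
  - by rewrite finset.in_setU finset.in_set1 eqxx orbT.
  - exact: hB.
  by rewrite lerD2r gset_succ; apply: hg.
have s0 := sigma_min B O.
have F0 := fA_ge0 O.
have E0 : 0 <= E by apply: sumr_ge0 => k _; apply: sqnorm_ge0.
set s := sigma_min B O in h2 *.
set D := f (greedy_set g i.+1) - f S in h3 *.
set Q := \sum_(v in O) _ in h2 h3.
case: (lerP s 0) => hs.
  apply: le_trans (_ : 0 <= _); first by apply: mulr_le0_ge0 => //; apply: sqr_ge0.
  have : 0 <= D by rewrite subr_ge0 gset_mono.
  move=> D0; apply: mulr_ge0 => //; apply: mulr_ge0 => //; apply: mulr_ge0 => //.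
have a1 := ler_wpM2l (ltW hs) h1.
have a2 := ler_wpM2l F0 h2.
have a3 := ler_wpM2l F0 h3.
nra.
Qed.

End Greedy.


Unset Implicit Arguments. Set Strict Implicit. Set Printing Implicit Defensive.

Theorem theorem1 (R : realType) (m nA nB : nat)
    (A : 'M[R]_(m, nA)) (B : 'M[R]_(m, nB))
    (hB : forall j : 'I_nB, col j B != 0)
    (k : nat) (hk : (k <= nB)%N)
    (OPT : {set 'I_nB}) (hOPTk : #|OPT| = k)
    (hOPT : forall S : {set 'I_nB}, #|S| = k -> fA A B S <= fA A B OPT)
    (hsig : 0 < sigma_min B OPT)
    (eps : R) (heps : 0 < eps)
    (r : nat) (hr : r%:Z = Num.ceil (16 * k%:R / (eps * sigma_min B OPT)))
    (g : 'I_r -> 'I_nB) (hg : is_greedy_run A B g) :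
  (1 - eps) * fA A B OPT <= fA A B (greedy_output g).
Proof.
have kpos : (0 < k)%N.
  rewrite lt0n; apply/negP => /eqP k0.
  move: hsig; rewrite /sigma_min.
  rewrite (_ : image _ _ = set0) ?inf0 ?ltxx //.
  apply/seteqP; split => z //= [x hx _]; move: hx.
  rewrite /sqnorm big1 => [/esym/eqP|i _]; first by rewrite oner_eq0.
  have h : (i < k)%N by rewrite -hOPTk ltn_ord.
  by rewrite k0 in h.
set F := fA A B OPT.
set s := sigma_min B OPT in hsig hr *.
have F0 : 0 <= F by apply: fA_ge0.
case: (eqVneq F 0) => [->|Fn0]; first by rewrite mulr0 fA_ge0.
have Fp : 0 < F by rewrite lt_neqAle eq_sym Fn0.
have kR : 0 < k%:R :> R by rewrite ltr0n.
set K := 4 * k%:R * F.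
have Kp : 0 < K by rewrite /K !mulr_gt0.
have claim : forall t, (t <= r)%N ->
    t%:R * s * (F - fA A B (greedy_set g t)) <= K.
  elim => [|t IH] ht; first by rewrite !mul0r ltW.
  have ht' : (t < r)%N by [].
  have {}IH := IH (ltnW ht').
  have mono := gset_mono A B g (Ordinal ht').
  have step := @greedy_step _ _ _ _ A B r g OPT hB hg (Ordinal ht').
  rewrite /= hOPTk -/F -/s in mono step.
  set f0 := fA A B (greedy_set g t) in IH mono step *.
  set f1 := fA A B (greedy_set g t.+1) in mono step *.
  have T0 : 0 <= t%:R :> R by rewrite ler0n.
  rewrite -addn1 natrD.
  case: (lerP (F - f1) 0) => he1.
    have : 0 <= (t%:R + 1) * s by apply: mulr_ge0; lra.
    nra.
  have {}step : s * (F - f0) ^+ 2 <= K * (f1 - f0) by apply: step; lra.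
  set e0 := F - f0 in IH step *.
  set e1 := F - f1 in he1 *.
  have Ef : f1 - f0 = e0 - e1 by rewrite /e0 /e1; ring.
  rewrite Ef in step.
  set w := s * e0.
  have wp : 0 < w by rewrite /w mulr_gt0 //; lra.
  have h1 : w ^+ 2 <= K * (w - s * e1).
    have := ler_wpM2l (ltW hsig) step.
    by rewrite /w; congr (_ <= _); ring.
  have h2 : K * (s * e1) <= w * (K - w) by nra.
  have h3 : 0 < K * (s * e1) by rewrite !mulr_gt0.
  have wK : w < K by nra.
  have IH' : t%:R * w <= K by rewrite /w mulrA.
  have h4 : K * ((t%:R + 1) * s * e1) <= K * K.
    have h5 : (K - t%:R * w) * (K - w) >= 0 by apply: mulr_ge0; lra.
    have h6 : K * ((t%:R + 1) * s * e1) = (t%:R + 1) * (K * (s * e1)) by ring.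
    rewrite h6.
    have h7 := ler_wpM2l (_ : 0 <= t%:R + 1) h2.
    nra.
  by rewrite ler_pM2l in h4.
have cr := claim r (leqnn r).
rewrite gset_r.
set fr := fA A B (greedy_set g r) in cr *.
have hr' : 16 * k%:R / (eps * s) <= r%:R.
  have := ceil_ge (16 * k%:R / (eps * s)); rewrite -hr.
  by rewrite -pmulrn.
have es : 0 < eps * s by rewrite mulr_gt0.
rewrite ler_pdivrMr // in hr'.
case: (lerP (F - fr) 0) => he; first by nra.
have : 16 * k%:R * (F - fr) <= eps * K.
  have := ler_wpM2l (ltW he) hr'.
  have := ler_wpM2l (ltW heps) cr.
  move=> a b.
  apply: le_trans (_ : _ <= (F - fr) * (r%:R * (eps * s))) _.
    by rewrite mulrC.
  apply: le_trans _ a.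
  by rewrite (_ : (F - fr) * _ = eps * (r%:R * s * (F - fr))) //; ring.
rewrite /K => h; nra.
Qed.
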